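(* Let $(M,\rho)$ be a complete metric space, let $f:M\to\mathbb{R}\cup\{+\infty\}$ be proper, lower semicontinuous and bounded below, and let $g:M\to\mathbb{R}$ be continuous with $$|\widetilde\nabla f|(x)>|\widetilde\nabla g|(x)\qquad\text{for all }x\in\operatorname{dom} f\setminus 0\operatorname{Crit} f.$$ Then for every $\varepsilon>0$ and every $x_0\in\operatorname{dom} f$ there exists $x\in\varepsilon\operatorname{Crit} f$ such that $$f(x)\le f(x_0)-\varepsilon\rho(x,x_0)\quad\text{and}\quad f(x_0)-g(x_0)\ge f(x)-g(x).$$ In particular, $f(y)-g(y)\ge\inf_{\varepsilon\operatorname{Crit} f}(f-g)$ for all $y\in\operatorname{dom} f$ and all $\varepsilon>0$.
   Context: $\operatorname{dom} f:=\{x:f(x)<+\infty\}$. $[t]^+:=\max\{0,t\}$ (with $[f(x)-f(y)]^+:=0$ if $f(y)=+\infty$). For $x\in\operatorname{dom} f$, the global slope is $|\widetilde\nabla f|(x):=\sup_{y\neq x}\frac{[f(x)-f(y)]^+}{\rho(x,y)}\in[0,+\infty]$. For $\varepsilon\ge0$, $\varepsilon\operatorname{Crit} f:=\{x\in\operatorname{dom} f:\ |\widetilde\nabla f|(x)\le\varepsilon\}$. *)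

(* Defs.v *)
From Stdlib Require Import Reals.
From Coquelicot Require Import Coquelicot.
Open Scope R_scope.

Definition is_metric {M : Type} (rho : M -> M -> R) : Prop :=
  (forall x y, 0 <= rho x y) /\
  (forall x y, rho x y = 0 <-> x = y) /\
  (forall x y, rho x y = rho y x) /\
  (forall x y z, rho x z <= rho x y + rho y z).

Definition metric_complete {M : Type} (rho : M -> M -> R) : Prop :=
  forall u : nat -> M,
    (forall e, 0 < e -> exists N, forall m n, (N <= m)%nat -> (N <= n)%nat ->
        rho (u m) (u n) < e) ->
    exists l, forall e, 0 < e -> exists N, forall n, (N <= n)%nat -> rho (u n) l < e.

Definition dom {M : Type} (f : M -> Rbar) (x : M) : Prop := Rbar_lt (f x) p_infty.

Definition proper_fun {M : Type} (f : M -> Rbar) : Prop := exists x, dom f x.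

Definition bounded_below {M : Type} (f : M -> Rbar) : Prop :=
  exists m : R, forall x, Rbar_le (Finite m) (f x).

Definition lsc {M : Type} (rho : M -> M -> R) (f : M -> Rbar) : Prop :=
  forall x (a : R), Rbar_lt (Finite a) (f x) ->
    exists d, 0 < d /\ forall y, rho x y < d -> Rbar_lt (Finite a) (f y).

Definition metric_continuous {M : Type} (rho : M -> M -> R) (g : M -> R) : Prop :=
  forall x e, 0 < e -> exists d, 0 < d /\ forall y, rho x y < d -> Rabs (g y - g x) < e.

(* [a - b]^+, with the convention [f(x) - f(y)]^+ := 0 when f(y) = +oo *)
Definition pos_diff (a b : Rbar) : R :=
  match a, b with
  | Finite a, Finite b => Rmax 0 (a - b)
  | _, _ => 0
  end.

(* global slope |~grad f|(x) = sup_{y <> x} [f x - f y]^+ / rho(x,y) in [0,+oo]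
   (0 is included in the set so that the sup over an empty family is 0). *)
Definition global_slope {M : Type} (rho : M -> M -> R) (f : M -> Rbar) (x : M) : Rbar :=
  Lub_Rbar (fun r => r = 0 \/ exists y, y <> x /\ r = pos_diff (f x) (f y) / rho x y).

Definition eps_crit {M : Type} (rho : M -> M -> R) (f : M -> Rbar) (eps : R) (x : M) : Prop :=
  dom f x /\ Rbar_le (global_slope rho f x) (Finite eps).

Definition inf_crit {M : Type} (rho : M -> M -> R) (f : M -> Rbar) (g : M -> R) (eps : R) : Rbar :=
  Glb_Rbar (fun r => exists x, eps_crit rho f eps x /\ Finite r = Rbar_minus (f x) (Finite (g x))).

(* Main.v *)
Require Import Defs.
From Stdlib Require Import Reals Lra Lia Classical ClassicalEpsilon.
From Coquelicot Require Import Coquelicot.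
Open Scope R_scope.

Lemma arch_small (r : R) : 0 < r -> exists N : nat, / (INR N + 1) < r.
Proof.
  intros Hr. destruct (archimed_cor1 r Hr) as [N [HN HN0]].
  exists N. apply Rle_lt_trans with (/ INR N); auto.
  apply Rinv_le_contravar. apply lt_0_INR; auto. lra.
Qed.

Lemma near_inf (M : Type) (P : M -> Prop) (F : M -> R) :
  (exists y, P y) -> (exists m, forall y, P y -> m <= F y) ->
  forall d, 0 < d -> exists y, P y /\ forall z, P z -> F y <= F z + d.
Proof.
  intros [y0 Hy0] [m Hm] d Hd.
  set (E := fun r => exists y, P y /\ r = - F y).
  assert (HB : bound E).
  { exists (- m). intros r [y [Py ->]]. specialize (Hm y Py). lra. }
  assert (HE : exists r, E r) by (exists (- F y0); exists y0; split; auto).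
  destruct (completeness E HB HE) as [s [Hub Hlub]].
  apply NNPP. intros Hn.
  assert (Hu : is_upper_bound E (s - d)).
  { intros r [y [Py ->]].
    assert (exists z, P z /\ F z + d < F y) as [z [Pz Hz]].
    { apply NNPP. intros Hn2. apply Hn. exists y. split; auto.
      intros z Pz. apply Rnot_lt_le. intros Hlt. apply Hn2. exists z. auto. }
    assert (- F z <= s) by (apply Hub; exists z; auto). lra. }
  specialize (Hlub _ Hu). lra.
Qed.

Lemma ekeland (M : Type) (rho : M -> M -> R) (Hmet : is_metric rho)
  (Hcompl : metric_complete rho) (C : M -> Prop) (F : M -> R) (eps : R) :
  0 < eps ->
  (forall (u : nat -> M) l, (forall n, C (u n)) ->
     (forall e, 0 < e -> exists N, forall n, (N <= n)%nat -> rho (u n) l < e) -> C l) ->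
  (forall l a, C l -> a < F l -> exists d, 0 < d /\ forall y, C y -> rho l y < d -> a < F y) ->
  (exists m, forall y, C y -> m <= F y) ->
  forall x0, C x0 -> exists x, C x /\ forall y, C y -> F x - eps * rho x y <= F y.
Proof.
  intros Heps Hclosed Hlsc [m Hm] x0 Cx0.
  destruct Hmet as [Hpos [Hzero [Hsym Htri]]].
  set (Sx := fun x y => C y /\ F y <= F x - eps * rho x y).
  assert (Srefl : forall a, C a -> Sx a a).
  { intros a Ca. split; auto. rewrite (proj2 (Hzero a a) eq_refl). lra. }
  assert (Strans : forall a b c, Sx a b -> Sx b c -> Sx a c).
  { intros a b c [_ Hab] [Cc Hbc]. split; auto. specialize (Htri a b c). nra. }
  assert (Hstep : forall (n : nat) x, {y | C x -> Sx x y /\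
             forall z, Sx x z -> F y <= F z + / (INR n + 1)}).
  { intros n x. apply constructive_indefinite_description.
    destruct (classic (C x)) as [Cx | nCx].
    - destruct (near_inf M (Sx x) F) with (d := / (INR n + 1)) as [y [Sy Hy]].
      + exists x. auto.
      + exists m. intros y [Cy _]. auto.
      + apply Rinv_0_lt_compat. pose proof (pos_INR n). lra.
      + exists y. auto.
    - exists x. intros H; contradiction. }
  set (step := fun n x => proj1_sig (Hstep n x)).
  set (u := fix u n := match n with O => x0 | S k => step k (u k) end).
  assert (Cu : forall n, C (u n)).
  { induction n as [|n IH]; simpl; auto.
    destruct (proj2_sig (Hstep n (u n)) IH) as [[Cy _] _]. exact Cy. }
  assert (Su1 : forall n, Sx (u n) (u (S n))).
  { intros n. simpl. destruct (proj2_sig (Hstep n (u n)) (Cu n)) as [H _]. exact H. }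
  assert (Sle : forall n k, Sx (u n) (u (n + k)%nat)).
  { intros n k. induction k as [|k IH].
    - rewrite Nat.add_0_r. apply Srefl, Cu.
    - rewrite Nat.add_succ_r. eapply Strans; eauto. }
  assert (Sle' : forall n p, (n <= p)%nat -> Sx (u n) (u p)).
  { intros n p Hnp. replace p with (n + (p - n))%nat by lia. apply Sle. }
  assert (Hsmall : forall n z, Sx (u (S n)) z -> eps * rho (u (S n)) z <= / (INR n + 1)).
  { intros n z Hz.
    assert (Hz' : Sx (u n) z) by (eapply Strans; eauto).
    pose proof (proj2 (proj2_sig (Hstep n (u n)) (Cu n)) z Hz') as H.
    change (proj1_sig (Hstep n (u n))) with (u (S n)) in H.
    destruct Hz as [_ Hz]. lra. }
  assert (Hcauchy : forall e, 0 < e -> exists N, forall p q, (N <= p)%nat -> (N <= q)%nat ->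
        rho (u p) (u q) < e).
  { intros e He. destruct (arch_small (eps * e / 2)) as [N HN].
    { apply Rdiv_lt_0_compat; [apply Rmult_lt_0_compat|]; lra. }
    exists (S N). intros p q Hp Hq.
    pose proof (Hsmall N (u p) (Sle' _ _ Hp)).
    pose proof (Hsmall N (u q) (Sle' _ _ Hq)).
    pose proof (Htri (u p) (u (S N)) (u q)).
    rewrite (Hsym (u p) (u (S N))) in H1.
    assert (eps * rho (u p) (u q) < eps * e) by nra.
    apply Rmult_lt_reg_l with eps; auto. }
  destruct (Hcompl u Hcauchy) as [l Hl].
  assert (Cl : C l) by (apply (Hclosed u l Cu Hl)).
  assert (Sl : forall n, Sx (u n) l).
  { intros n. split; auto. apply Rnot_lt_le. intros Hlt.
    set (c := F (u n) - eps * rho (u n) l) in *.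
    set (a := (c + F l) / 2).
    destruct (Hlsc l a Cl) as [d [Hd Hld]]. { unfold a. lra. }
    destruct (Hl (Rmin d ((a - c) / eps))) as [N HN].
    { apply Rmin_glb_lt; auto. apply Rdiv_lt_0_compat; auto. unfold a; lra. }
    set (p := Nat.max n N).
    specialize (HN p (Nat.le_max_r _ _)).
    assert (H1 : rho (u p) l < d) by (eapply Rlt_le_trans; [exact HN| apply Rmin_l]).
    assert (H2 : rho (u p) l < (a - c) / eps) by (eapply Rlt_le_trans; [exact HN| apply Rmin_r]).
    assert (H3 : a < F (u p)) by (apply Hld; [apply Cu | rewrite Hsym; auto]).
    destruct (Sle' n p (Nat.le_max_l _ _)) as [_ H4].
    pose proof (Htri (u n) (u p) l).
    assert (eps * rho (u p) l < a - c).
    { apply Rmult_lt_compat_l with (r := eps) in H2; auto.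
      replace (eps * ((a - c) / eps)) with (a - c) in H2 by (field; lra). lra. }
    unfold c in *. nra. }
  exists l. split; auto. intros y Cy. apply Rnot_lt_le. intros Hy.
  assert (Sly : Sx l y) by (split; auto; lra).
  assert (Hr : rho l y <= 0).
  { apply Rnot_lt_le. intros Hr.
    destruct (arch_small (eps * rho l y / 2)) as [N HN].
    { apply Rmult_lt_0_compat; [apply Rmult_lt_0_compat|]; lra. }
    pose proof (Hsmall N l (Sl (S N))).
    pose proof (Hsmall N y (Strans _ _ _ (Sl (S N)) Sly)).
    pose proof (Htri l (u (S N)) y). rewrite (Hsym l (u (S N))) in H1.
    nra. }
  assert (rho l y = 0) by (specialize (Hpos l y); lra).
  apply Hzero in H. subst y. rewrite (proj2 (Hzero l l) eq_refl) in Hy. lra.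
Qed.

Lemma lsc_le_closed (M : Type) (rho : M -> M -> R) (Hmet : is_metric rho)
  (f : M -> Rbar) (h : M -> R) (Hlsc : lsc rho f) (Hh : metric_continuous rho h)
  (u : nat -> M) (l : M) :
  (forall e, 0 < e -> exists N, forall n, (N <= n)%nat -> rho (u n) l < e) ->
  (forall n, Rbar_le (f (u n)) (Finite (h (u n)))) ->
  Rbar_le (f l) (Finite (h l)).
Proof.
  intros Hl Hu. destruct Hmet as [Hpos [Hzero [Hsym Htri]]].
  apply Rbar_not_lt_le. intros Hlt.
  assert (exists a, h l < a /\ Rbar_lt (Finite a) (f l)) as [a [Ha1 Ha2]].
  { destruct (f l) as [r| |]; simpl in Hlt.
    - exists ((h l + r) / 2). simpl. split; lra.
    - exists (h l + 1). simpl. split; [lra|exact I].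
    - contradiction. }
  destruct (Hlsc l a Ha2) as [d1 [Hd1 H1]].
  destruct (Hh l (a - h l)) as [d2 [Hd2 H2]]. lra.
  destruct (Hl (Rmin d1 d2)) as [N HN]. apply Rmin_glb_lt; auto.
  specialize (HN N (le_n N)). rewrite Hsym in HN.
  assert (A1 : Rbar_lt (Finite a) (f (u N))) by (apply H1; eapply Rlt_le_trans; [exact HN| apply Rmin_l]).
  assert (A2 : Rabs (h (u N) - h l) < a - h l) by (apply H2; eapply Rlt_le_trans; [exact HN| apply Rmin_r]).
  specialize (Hu N).
  pose proof (Rbar_lt_le_trans _ _ _ A1 Hu) as A3. simpl in A3.
  apply Rabs_def2 in A2. lra.
Qed.

Lemma part1 (M : Type) (rho : M -> M -> R) (f : M -> Rbar) (g : M -> R)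
  (Hmet : is_metric rho) (Hcompl : metric_complete rho)
  (Hlsc : lsc rho f) (Hbdd : bounded_below f)
  (Hg : metric_continuous rho g)
  (Hslope : forall x, dom f x -> ~ eps_crit rho f 0 x ->
     Rbar_lt (global_slope rho (fun y => Finite (g y)) x) (global_slope rho f x)) :
  (forall eps, 0 < eps -> forall x0, dom f x0 ->
     exists x, eps_crit rho f eps x /\
       Rbar_le (f x) (Rbar_minus (f x0) (Finite (eps * rho x x0))) /\
       Rbar_le (Rbar_minus (f x) (Finite (g x))) (Rbar_minus (f x0) (Finite (g x0)))).
Proof.
  intros eps Heps x0 Hx0.
  pose proof Hmet as Hmet'.
  destruct Hmet' as [Hpos [Hzero [Hsym Htri]]].
  destruct Hbdd as [mb Hmb].
  assert (Hfin : forall y b, Rbar_le (f y) (Finite b) -> f y = Finite (real (f y))).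
  { intros y b Hb. specialize (Hmb y). destruct (f y); simpl in *; auto; contradiction. }
  assert (Hfx0 : f x0 = Finite (real (f x0))).
  { specialize (Hmb x0). unfold dom in Hx0. destruct (f x0); simpl in *; auto; contradiction. }
  set (a0 := real (f x0)) in *.
  set (h1 := fun y => a0 - eps * rho y x0).
  set (h2 := fun y => a0 - g x0 + g y).
  set (C := fun y => Rbar_le (f y) (Finite (h1 y)) /\ Rbar_le (f y) (Finite (h2 y))).
  set (F := fun y => real (f y)).
  assert (Hh1 : metric_continuous rho h1).
  { intros x e He. exists (e / eps). split. apply Rdiv_lt_0_compat; auto.
    intros y Hy. unfold h1.
    assert (eps * rho x y < e).
    { apply Rmult_lt_compat_l with (r := eps) in Hy; auto.
      replace (eps * (e / eps)) with e in Hy by (field; lra). lra. }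
    pose proof (Htri y x x0). pose proof (Htri x y x0). rewrite (Hsym y x) in H0.
    apply Rabs_def1; nra. }
  assert (Hh2 : metric_continuous rho h2).
  { intros x e He. destruct (Hg x e He) as [d [Hd H]]. exists d. split; auto.
    intros y Hy. unfold h2. replace (a0 - g x0 + g y - (a0 - g x0 + g x)) with (g y - g x) by ring.
    auto. }
  assert (HCfin : forall y, C y -> f y = Finite (F y)).
  { intros y [Hy _]. unfold F. eapply Hfin; eauto. }
  destruct (ekeland M rho Hmet Hcompl C F eps Heps) with (x0 := x0) as [x [Cx Hek]].
  - intros u l HCu Hl. split; eapply lsc_le_closed; eauto; intros n; apply HCu.
  - intros l a Cl Ha. destruct (Hlsc l a) as [d [Hd H]].
    { rewrite (HCfin l Cl). exact Ha. }
    exists d. split; auto. intros y Cy Hy. specialize (H y Hy).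
    rewrite (HCfin y Cy) in H. exact H.
  - exists mb. intros y Cy. specialize (Hmb y). rewrite (HCfin y Cy) in Hmb. exact Hmb.
  - unfold C, h1, h2. rewrite Hfx0, (proj2 (Hzero x0 x0) eq_refl). simpl. split; lra.
  - pose proof (HCfin x Cx) as Hfx.
    destruct Cx as [Cx1 Cx2]. rewrite Hfx in Cx1, Cx2. simpl in Cx1, Cx2. unfold h1, h2 in Cx1, Cx2.
    exists x. split; [|split].
    + split. { unfold dom. rewrite Hfx. exact I. }
      apply Rbar_not_lt_le. intros Hlt.
      assert (Hn0 : ~ eps_crit rho f 0 x).
      { intros [_ H]. pose proof (Rbar_lt_le_trans _ _ _ Hlt H). simpl in H0. lra. }
      assert (Hdom : dom f x) by (unfold dom; rewrite Hfx; exact I).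
      pose proof (Hslope x Hdom Hn0) as Hs.
      pose proof (Lub_Rbar_correct (fun r => r = 0 \/ exists y, y <> x /\
          r = pos_diff (Finite (g x)) (Finite (g y)) / rho x y)) as [Hgub _].
      change (Lub_Rbar _) with (global_slope rho (fun y => Finite (g y)) x) in Hgub.
      assert (exists sg, global_slope rho (fun y => Finite (g y)) x = Finite sg /\ 0 <= sg)
        as [sg [Esg Hsg0]].
      { pose proof (Hgub 0 (or_introl eq_refl)) as H0.
        destruct (global_slope rho (fun y => Finite (g y)) x) as [s| |]; simpl in *.
        - exists s; auto.
        - contradiction.
        - contradiction. }
      rewrite Esg in Hgub, Hs.
      pose proof (Lub_Rbar_correct (fun r => r = 0 \/ exists y, y <> x /\
          r = pos_diff (f x) (f y) / rho x y)) as [_ Hflub].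
      change (Lub_Rbar _) with (global_slope rho f x) in Hflub.
      set (t := Rmax eps sg).
      assert (Ht : Rbar_lt (Finite t) (global_slope rho f x)).
      { unfold t. destruct (Rle_dec eps sg).
        - rewrite Rmax_right; auto.
        - rewrite Rmax_left; [auto|lra]. }
      assert (Hte : eps <= t) by apply Rmax_l.
      assert (Hts : sg <= t) by apply Rmax_r.
      assert (exists r, (r = 0 \/ exists y, y <> x /\ r = pos_diff (f x) (f y) / rho x y) /\ t < r)
        as [r [Hr Htr]].
      { apply NNPP. intros Hn. apply (Rbar_lt_not_le _ _ Ht). apply Hflub.
        intros r Hr. simpl. apply Rnot_lt_le. intros Hlt'. apply Hn. exists r. auto. }
      destruct Hr as [-> | [y [Hyx ->]]]; [lra|].
      assert (Hrho : 0 < rho x y).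
      { destruct (Rle_lt_or_eq_dec 0 (rho x y) (Hpos x y)); auto.
        symmetry in e. apply Hzero in e. congruence. }
      rewrite Hfx in Htr.
      destruct (f y) as [fy| |] eqn:Efy; simpl in Htr;
        try (unfold Rdiv in Htr; rewrite Rmult_0_l in Htr; lra).
      set (D := Rmax 0 (F x - fy)) in Htr.
      assert (HD : t * rho x y < D).
      { apply Rmult_lt_compat_r with (r := rho x y) in Htr; auto.
        replace (D / rho x y * rho x y) with D in Htr by (field; lra). lra. }
      assert (HD2 : D = F x - fy).
      { unfold D, Rmax. destruct (Rle_dec 0 (F x - fy)); auto.
        assert (0 <= t * rho x y) by nra. unfold D, Rmax in HD.
        destruct (Rle_dec 0 (F x - fy)); lra. }
      assert (Hgy : g x - g y <= sg * rho x y).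
      { assert (Hgr : Rmax 0 (g x - g y) / rho x y <= sg).
        { pose proof (Hgub _ (or_intror (ex_intro _ y (conj Hyx eq_refl)))) as H.
          simpl in H. exact H. }
        apply Rmult_le_compat_r with (r := rho x y) in Hgr; [|lra].
        replace (Rmax 0 (g x - g y) / rho x y * rho x y) with (Rmax 0 (g x - g y)) in Hgr
          by (field; lra).
        pose proof (Rmax_r 0 (g x - g y)). lra. }
      assert (Hte2 : eps * rho x y <= t * rho x y) by nra.
      assert (Hts2 : sg * rho x y <= t * rho x y) by nra.
      assert (Cy : C y).
      { unfold C, h1, h2. rewrite Efy. simpl. split.
        - pose proof (Htri y x x0). rewrite (Hsym y x) in H. nra.
        - lra. }
      specialize (Hek y Cy). unfold F at 2 in Hek. rewrite Efy in Hek. simpl in Hek. lra.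
    + rewrite Hfx, Hfx0. simpl. lra.
    + rewrite Hfx, Hfx0. simpl. lra.
Qed.

Theorem proposition3p6 (M : Type) (rho : M -> M -> R) (f : M -> Rbar) (g : M -> R)
  (Hmet : is_metric rho) (Hcompl : metric_complete rho)
  (Hproper : proper_fun f) (Hlsc : lsc rho f) (Hbdd : bounded_below f)
  (Hg : metric_continuous rho g)
  (Hslope : forall x, dom f x -> ~ eps_crit rho f 0 x ->
     Rbar_lt (global_slope rho (fun y => Finite (g y)) x) (global_slope rho f x)) :
  (forall eps, 0 < eps -> forall x0, dom f x0 ->
     exists x, eps_crit rho f eps x /\
       Rbar_le (f x) (Rbar_minus (f x0) (Finite (eps * rho x x0))) /\
       Rbar_le (Rbar_minus (f x) (Finite (g x))) (Rbar_minus (f x0) (Finite (g x0)))) /\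
  (forall y eps, dom f y -> 0 < eps ->
     Rbar_le (inf_crit rho f g eps) (Rbar_minus (f y) (Finite (g y)))).
Proof.
  pose proof (part1 M rho f g Hmet Hcompl Hlsc Hbdd Hg Hslope) as P1.
  split; auto.
  intros y eps Hy Heps.
  destruct (P1 eps Heps y Hy) as [x [Hcx [_ H3]]].
  pose proof (Glb_Rbar_correct (fun r => exists x, eps_crit rho f eps x /\
     Finite r = Rbar_minus (f x) (Finite (g x)))) as [Hlb _].
  change (Glb_Rbar _) with (inf_crit rho f g eps) in Hlb.
  assert (Hfx : f x = Finite (real (f x))).
  { destruct Hcx as [Hd _]. destruct Hbdd as [mb Hmb]. specialize (Hmb x).
    unfold dom in Hd. destruct (f x); simpl in *; auto; contradiction. }
  eapply Rbar_le_trans; [apply (Hlb (real (f x) - g x))|].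
  - exists x. split; auto. rewrite Hfx. reflexivity.
  - rewrite Hfx in H3. exact H3.
Qed.
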